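(* Let $\mathcal D_{red}$ be a reduced datum of finite Cartan type and $l=(l_i)$ a family of nonzero scalars, and let $E_i=y_i$, $F_i=x_iL_i^{-1}$ in $U(\mathcal D_{red},l)$. For each connected component $J$ of the Dynkin diagram of $(a_{ij})$ choose $d_i\in\{1,2,3\}$ ($i\in J$) and $q_J\in k$ with $q_{ii}=q_J^{2d_i}$ and $d_ia_{ij}=d_ja_{ji}$ for $i,j\in J$, and set $p_{ij}=q_{ij}q_J^{-d_ia_{ij}}$ if $i,j\in J$, $p_{ij}=q_{ij}$ if $i,j$ are in different components. Then the defining relations of $U(\mathcal D_{red},l)$ are equivalent, in $U(\mathcal D_{red},l)$, to: for all $i\ne j$ with $i\in J$, $$\sum_{s=0}^{1-a_{ij}}(-p_{ij})^s\begin{bmatrix}1-a_{ij}\\ s\end{bmatrix}_{q_J^{d_i}}E_i^{1-a_{ij}-s}E_jE_i^s=0,\qquad \sum_{s=0}^{1-a_{ij}}(-p_{ij}^{-1})^s\begin{bmatrix}1-a_{ij}\\ s\end{bmatrix}_{q_J^{d_i}}F_i^{1-a_{ij}-s}F_jF_i^s=0,$$ and for all $i,j$: $E_iF_j-F_jE_i=\delta_{ij}q_{ii}^{-1}l_i(K_i-L_i^{-1})$. Moreover, $gE_ig^{-1}=\chi_i(g)E_i$, $gF_ig^{-1}=\chi_i^{-1}(g)F_i$ for $g\in\Gamma$, and $\Delta(E_i)=K_i\otimes E_i+E_i\otimes1$, $\Delta(F_i)=1\otimes F_i+F_i\otimes L_i^{-1}$.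
   Context: $k$ is an algebraically closed field of characteristic zero; $\widehat\Gamma$ is the character group of the abelian group $\Gamma$. A reduced datum of finite Cartan type $\mathcal D_{red}=\mathcal D_{red}(\Gamma,(L_i)_{1\le i\le n},(K_i)_{1\le i\le n},(\chi_i)_{1\le i\le n},(a_{ij}))$ consists of $n\ge1$, $L_i,K_i\in\Gamma$, $\chi_i\in\widehat\Gamma$, a Cartan matrix $(a_{ij})$ of finite type with $\chi_i(K_j)\chi_j(K_i)=\chi_i(K_i)^{a_{ij}}$, $\chi_i(L_j)=\chi_j(K_i)$, $K_iL_i\ne1$, $\chi_i(K_i)\ne1$. $q_{ij}=\chi_j(K_i)$. $U(\mathcal D_{red},l)$ is the quotient Hopf algebra of the smash product $k\langle x_1,\dots,x_n,y_1,\dots,y_n\rangle\#k[\Gamma]$, where $gx_ig^{-1}=\chi_i^{-1}(g)x_i$, $gy_ig^{-1}=\chi_i(g)y_i$, $\Delta(x_i)=L_i\otimes x_i+x_i\otimes1$, $\Delta(y_i)=K_i\otimes y_i+y_i\otimes1$, $\Delta(g)=g\otimes g$, by the ideal generated by $\operatorname{ad}_c(x_i)^{1-a_{ij}}(x_j)$, $\operatorname{ad}_c(y_i)^{1-a_{ij}}(y_j)$ ($i\ne j$) and $x_iy_j-\chi_j(L_i)y_jx_i-\delta_{ij}l_i(1-K_iL_i)$, with $\operatorname{ad}_c(x_i)(w)=x_iw-(L_iwL_i^{-1})x_i$, $\operatorname{ad}_c(y_i)(w)=y_iw-(K_iwK_i^{-1})y_i$. Gaussian binomials: with $[n]=\frac{v^n-v^{-n}}{v-v^{-1}}$,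 $[n]^!=[1]\cdots[n]$, $\begin{bmatrix}n\\ i\end{bmatrix}=\frac{[n]^!}{[i]^![n-i]^!}$, and $\begin{bmatrix}n\\ i\end{bmatrix}_q$ its specialization $v\mapsto q$. *)

(* Defs.v *)
From HB Require Import structures.
From mathcomp Require Import all_boot all_order all_algebra.
Set Implicit Arguments. Unset Strict Implicit. Unset Printing Implicit Defensive.
Import Order.TTheory GRing.Theory Num.Theory.
Local Open Scope ring_scope.

(* The abelian group Gamma is written additively (a zmodType): the group
   product g h is g + h, the unit is 0, the inverse g^-1 is -g. *)

Definition is_character (k : fieldType) (G : zmodType) (chi : G -> k) : Prop :=
  (forall g h, chi (g + h) = chi g * chi h) /\ (forall g, chi g != 0).

Definition finite_cartan (n : nat) (A : 'M[int]_n) : Prop :=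
  (forall i, A i i = 2) /\
  (forall i j, i != j -> A i j <= 0) /\
  (forall i j, A i j = 0 -> A j i = 0) /\
  exists d : 'I_n -> nat,
    (forall i, (0 < d i)%N) /\
    (forall i j, (d i)%:Z * A i j = (d j)%:Z * A j i) /\
    (forall v : 'I_n -> rat, (exists i, v i != 0) ->
       0 < \sum_i \sum_j v i * ((d i)%:Z * A i j)%:~R * v j).

Definition reduced_datum (k : fieldType) (G : zmodType) (n : nat)
    (L K : 'I_n -> G) (chi : 'I_n -> G -> k) (A : 'M[int]_n) : Prop :=
  (0 < n)%N /\ finite_cartan A /\
  (forall i, is_character (chi i)) /\
  (forall i j, chi i (K j) * chi j (K i) = chi i (K i) ^ (A i j)) /\
  (forall i j, chi i (L j) = chi j (K i)) /\
  (forall i, K i + L i != 0) /\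
  (forall i, chi i (K i) != 1).

Definition qq (k : fieldType) (G : zmodType) (n : nat)
    (K : 'I_n -> G) (chi : 'I_n -> G -> k) (i j : 'I_n) : k := chi j (K i).

Definition dynkin_conn (n : nat) (A : 'M[int]_n) : rel 'I_n :=
  connect (fun i j => A i j != 0).

(* p_ij as in the statement; qJ i is the scalar q_J of the component J of i *)
Definition pp (k : fieldType) (G : zmodType) (n : nat)
    (K : 'I_n -> G) (chi : 'I_n -> G -> k) (A : 'M[int]_n)
    (d : 'I_n -> nat) (qJ : 'I_n -> k) (i j : 'I_n) : k :=
  if dynkin_conn A i j then qq K chi i j * qJ i ^ (- ((d i)%:Z * A i j))
  else qq K chi i j.

(* Gaussian binomial [m choose s] (a Laurent polynomial in v, given by the
   q-Pascal rule [m;s] = v^{-s}[m-1;s] + v^{m-s}[m-1;s-1]), specialized at v. *)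
Fixpoint gbinom (R : unitRingType) (v : R) (m s : nat) : R :=
  match m, s with
  | _, 0 => 1
  | 0, _.+1 => 0
  | m'.+1, s'.+1 => v ^- s'.+1 * gbinom v m' s'.+1 + v ^+ (m' - s') * gbinom v m' s'
  end.

(* The data (x, y, rho) in an algebra B over k, rho : Gamma -> B^x a group
   homomorphism, satisfying the smash product relations of
   k<x_1..x_n,y_1..y_n> # k[Gamma]; i.e. an algebra map from the smash
   product to B. *)
Definition smash_rep (k : fieldType) (G : zmodType) (B : algType k) (n : nat)
    (chi : 'I_n -> G -> k) (x y : 'I_n -> B) (rho : G -> B) : Prop :=
  rho 0 = 1 /\
  (forall g h, rho (g + h) = rho g * rho h) /\
  (forall g i, rho g * x i * rho (- g) = (chi i g)^-1 *: x i) /\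
  (forall g i, rho g * y i * rho (- g) = chi i g *: y i).

Definition adc (B : pzRingType) (g ginv a w : B) : B := a * w - (g * w * ginv) * a.

(* The defining relations of U(D_red, l) (beyond those of the smash product). *)
Definition orig_rels (k : fieldType) (G : zmodType) (B : algType k) (n : nat)
    (L K : 'I_n -> G) (chi : 'I_n -> G -> k) (A : 'M[int]_n) (l : 'I_n -> k)
    (x y : 'I_n -> B) (rho : G -> B) : Prop :=
  (forall i j, i != j ->
     iter `|1 - A i j|%N (adc (rho (L i)) (rho (- L i)) (x i)) (x j) = 0) /\
  (forall i j, i != j ->
     iter `|1 - A i j|%N (adc (rho (K i)) (rho (- K i)) (y i)) (y j) = 0) /\
  (forall i j, x i * y j - chi j (L i) *: (y j * x i)
                 - ((i == j)%:R * l i) *: (1 - rho (K i + L i)) = 0).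

Definition new_rels (k : fieldType) (G : zmodType) (B : algType k) (n : nat)
    (L K : 'I_n -> G) (chi : 'I_n -> G -> k) (A : 'M[int]_n) (l : 'I_n -> k)
    (d : 'I_n -> nat) (qJ : 'I_n -> k) (E F : 'I_n -> B) (rho : G -> B) : Prop :=
  (forall i j, i != j ->
     \sum_(s < `|1 - A i j|%N.+1)
        ((- pp K chi A d qJ i j) ^+ s * gbinom (qJ i ^+ d i) `|1 - A i j|%N s)
          *: (E i ^+ (`|1 - A i j|%N - s) * E j * E i ^+ s) = 0) /\
  (forall i j, i != j ->
     \sum_(s < `|1 - A i j|%N.+1)
        ((- (pp K chi A d qJ i j)^-1) ^+ s * gbinom (qJ i ^+ d i) `|1 - A i j|%N s)
          *: (F i ^+ (`|1 - A i j|%N - s) * F j * F i ^+ s) = 0) /\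
  (forall i j, E i * F j - F j * E i
     = ((i == j)%:R * (qq K chi i i)^-1 * l i) *: (rho (K i) - rho (- L i))).

(* Main.v *)
Require Import Defs.
From HB Require Import structures.
From mathcomp Require Import all_boot all_order all_algebra.
From mathcomp Require Import ring zify.
Set Implicit Arguments. Unset Strict Implicit. Unset Printing Implicit Defensive.
Import Order.TTheory GRing.Theory Num.Theory.
Local Open Scope ring_scope.

Section Scal.
Variable k : fieldType.

Definition Cf (g : nat -> k) (m s : nat) : k :=
  (\prod_(t < m) (1 - (g t)%:P * 'X))`_s.

Lemma Cf0s g s : Cf g 0 s = (s == 0)%:R.
Proof. by rewrite /Cf big_ord0 coef1. Qed.

Lemma CfS g m s : Cf g m.+1 s = Cf g m s - (if s is s'.+1 then g m * Cf g m s' else 0).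
Proof.
rewrite /Cf big_ord_recr /= mulrBr mulr1 coefB mulrA coefMX coefMC.
by case: s => [|s] //=; rewrite mulrC.
Qed.

Lemma Cf_gt g m s : (m < s)%N -> Cf g m s = 0.
Proof.
elim: m s => [|m IH] [|s] //= h.
- by rewrite Cf0s.
- by rewrite CfS !IH ?mulr0 ?subr0 //; apply: ltnW.
Qed.

Lemma Cf_m0 g m : Cf g m 0 = 1.
Proof. by elim: m => [|m IH]; rewrite ?Cf0s // CfS IH subr0. Qed.

Lemma Cf_rev g1 g2 m : (forall t, (t < m)%N -> g2 t = g1 (m - t.+1)%N) ->
  forall s, Cf g1 m s = Cf g2 m s.
Proof.
move=> h s; rewrite /Cf; apply: (congr1 (fun p : {poly k} => p`_s)).
rewrite (reindex_inj rev_ord_inj) /=.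
by apply: eq_bigr => t _; rewrite h.
Qed.

Lemma gb0 (v : k) m : gbinom v m 0 = 1.
Proof. by case: m. Qed.

Lemma gb_gt (v : k) m s : (m < s)%N -> gbinom v m s = 0.
Proof.
elim: m s => [|m IH] [|s] //= h.
by rewrite !IH ?mulr0 ?addr0 //; apply: ltnW.
Qed.

Lemma Cf_closed (Q b : k) m s : Q != 0 ->
  Q ^+ s * Cf (fun t => Q ^+ (2 * t) * b) m s = (- b) ^+ s * Q ^+ (s * m) * gbinom Q m s.
Proof.
move=> Q0; elim: m s => [|m IH] [|s].
- by rewrite Cf0s /= !expr0 !mulr1.
- by rewrite Cf0s /= !mulr0.
- by rewrite Cf_m0 gb0 mul0n !expr0 !mulr1.
rewrite CfS /=.
have e1 := IH s.+1; have e0 := IH s.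
set C1 := Cf _ m s.+1 in e1 *; set C0 := Cf _ m s in e0 *.
set g1 := gbinom Q m s.+1 in e1 *; set g0 := gbinom Q m s in e0 *.
have E0 : Q ^+ (s.+1 * m.+1) * (Q ^+ (m - s) * g0) = Q^+(2 * m).+1 * Q^+(s * m) * g0.
  have [le|lt] := leqP s m; last by rewrite /g0 (gb_gt _ lt) !mulr0.
  rewrite !mulrA -!exprD; congr (Q ^+ _ * _); lia.
have E1 : Q ^+ (s.+1 * m.+1) * (Q ^- s.+1 * g1) = Q^+(s.+1 * m) * g1.
  rewrite mulnS exprD; field; exact: expf_neq0.
have -> : Q ^+ s.+1 * (C1 - Q ^+ (2 * m) * b * C0) =
   (Q ^+ s.+1 * C1) - Q^+(2 * m).+1 * b * (Q ^+ s * C0).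
  by rewrite !exprS; ring.
rewrite e1 e0 -[in RHS]mulrA [in RHS]mulrDr E0 E1 !exprS; ring.
Qed.
End Scal.


Section NC.
Variables (k : fieldType) (B : algType k).

Lemma expand (a : B) (u : nat -> B) (mu g : nat -> k) :
  (forall m, u m.+1 = mu m *: (a * u m - g m *: (u m * a))) ->
  forall m, u m = (\prod_(t < m) mu t) *:
     \sum_(0 <= s < m.+1) Cf g m s *: (a ^+ (m - s) * u 0%N * a ^+ s).
Proof.
move=> rec; elim=> [|m IH].
  by rewrite big_ord0 scale1r big_nat1 Cf0s /= scale1r expr0 mulr1 mul1r.
rewrite rec {1 2}IH big_ord_recr /= -scalerAr -scalerAl (scalerA (g m)) mulrC.
rewrite -(scalerA (\prod_(t < m) mu t) (g m)) -scalerBr scalerA [mu m * _]mulrC; congr (_ *: _).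
set w := u 0%N.
rewrite mulr_sumr mulr_suml.
rewrite (eq_big_nat _ _ (F1 := fun s => a * (Cf g m s *: (a ^+ (m - s) * w * a ^+ s)))
   (F2 := fun s => Cf g m s *: (a ^+ (m.+1 - s) * w * a ^+ s))); last first.
  move=> s /andP [_ hs]; rewrite -scalerAr !mulrA -exprS subSn //.
rewrite (eq_big_nat _ _ (F1 := fun s => (Cf g m s *: (a ^+ (m - s) * w * a ^+ s)) * a)
   (F2 := fun s => Cf g m s *: (a ^+ (m.+1 - s.+1) * w * a ^+ s.+1))); last first.
  by move=> s _; rewrite -scalerAl -(mulrA _ (a ^+ s)) -exprSr subSS.
symmetry.
rewrite big_nat_recl // Cf_m0.
rewrite (eq_big_nat _ _ (F1 := fun s => Cf g m.+1 s.+1 *: (a ^+ (m.+1 - s.+1) * w * a ^+ s.+1))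
   (F2 := fun s => Cf g m s.+1 *: (a ^+ (m.+1 - s.+1) * w * a ^+ s.+1)
        - g m *: (Cf g m s *: (a ^+ (m.+1 - s.+1) * w * a ^+ s.+1)))); last first.
  by move=> s _; rewrite CfS scalerBl scalerA.
rewrite sumrB -scaler_sumr [in RHS]big_nat_recl // Cf_m0.
rewrite [X in _ + (X - _)]big_nat_recr //= (@Cf_gt _ g m m.+1) // scale0r addr0.
by rewrite addrA.
Qed.

End NC.


Section NC2.
Variables (k : fieldType) (B : algType k).

Lemma conjM (g gi : B) : gi * g = 1 -> forall p q : B,
  g * (p * q) * gi = (g * p * gi) * (g * q * gi).
Proof. by move=> h p q; rewrite !mulrA -(mulrA _ gi g) h mulr1. Qed.

Lemma adc_hom (g gi a w : B) (al be : k) :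
  gi * g = 1 -> g * a * gi = al *: a -> g * w * gi = be *: w ->
  forall m, g * iter m (adc g gi a) w * gi = (al ^+ m * be) *: iter m (adc g gi a) w.
Proof.
move=> hgi ha hw; elim=> [|m IH] /=; first by rewrite expr0 mul1r.
rewrite /adc; set u := iter m _ w.
rewrite mulrBr mulrBl (conjM hgi a u) (conjM hgi (g * u * gi) a) ha IH.
rewrite -(scalerAr _ g u) -(scalerAl _ (g * u) gi) IH.
rewrite -!scalerAl -!scalerAr !scalerA scalerBr !scalerA.

congr (_ *: _ - _ *: _).
  by rewrite exprS; ring.
by rewrite exprS; ring.
Qed.

Lemma iter_expand (g gi a w : B) (al be : k) :
  gi * g = 1 -> g * a * gi = al *: a -> g * w * gi = be *: w ->
  forall m, iter m (adc g gi a) w =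
    \sum_(0 <= s < m.+1) Cf (fun t => al ^+ t * be) m s *: (a ^+ (m - s) * w * a ^+ s).
Proof.
move=> hgi ha hw m.
rewrite (@expand _ _ a (fun m => iter m (adc g gi a) w) (fun _ => 1) (fun t => al ^+ t * be)) /=.
  by rewrite big1 // scale1r.
move=> m' /=; rewrite scale1r /adc (adc_hom hgi ha hw) scalerAl //.
Qed.

End NC2.


Section Chars.
Variables (k : fieldType) (G : zmodType) (c : G -> k).
Hypothesis hc : is_character c.

Lemma chi_nz g : c g != 0. Proof. by case: hc. Qed.
Lemma chi0 : c 0 = 1.
Proof. case: hc => hM hnz; apply: (mulfI (hnz 0)); by rewrite mulr1 -hM addr0. Qed.
Lemma chiN g : c (- g) = (c g)^-1.
Proof. case: hc => hM hnz; apply: (mulfI (hnz g)); by rewrite -hM subrr chi0 divff. Qed.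
Lemma chiD g h : c (g + h) = c g * c h. Proof. by case: hc. Qed.
Lemma chiMn g m : c (g *+ m) = c g ^+ m.
Proof. by elim: m => [|m IH]; rewrite ?mulr0n ?chi0 // mulrS chiD IH exprS. Qed.
End Chars.

Section Rho.
Variables (k : fieldType) (G : zmodType) (B : algType k) (n : nat).
Variables (chi : 'I_n -> G -> k) (x y : 'I_n -> B) (rho : G -> B).
Hypothesis hs : smash_rep chi x y rho.

Lemma rhoV g : rho g * rho (- g) = 1.
Proof. by case: hs => r0 [rD _]; rewrite -rD subrr r0. Qed.
Lemma rhoVl g : rho (- g) * rho g = 1.
Proof. by case: hs => r0 [rD _]; rewrite -rD addNr r0. Qed.
Lemma rhoC g h : rho g * rho h = rho h * rho g.
Proof. by case: hs => r0 [rD _]; rewrite -!rD addrC. Qed.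
Lemma rhoD g h : rho (g + h) = rho g * rho h.
Proof. by case: hs => r0 [rD _]. Qed.
Lemma ryc g i : rho g * y i = chi i g *: (y i * rho g).
Proof.
case: hs => _ [_ [_ hy]].
by rewrite -[LHS]mulr1 -(rhoVl g) mulrA (hy g i) -scalerAl.
Qed.
Lemma rxc g i : rho g * x i = (chi i g)^-1 *: (x i * rho g).
Proof.
case: hs => _ [_ [hx _]].
by rewrite -[LHS]mulr1 -(rhoVl g) mulrA (hx g i) -scalerAl.
Qed.
End Rho.


Section Mixed.
Variables (k : fieldType) (G : zmodType) (B : algType k) (n : nat).
Variables (chi : 'I_n -> G -> k) (x y : 'I_n -> B) (rho : G -> B).
Variables (L K : 'I_n -> G) (l : 'I_n -> k).
Hypothesis hs : smash_rep chi x y rho.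
Hypothesis chars : forall i, is_character (chi i).
Hypothesis Lrel : forall i j, chi i (L j) = chi j (K i).

Lemma mixed_eq i j :
  y i * (x j * rho (- L j)) - x j * rho (- L j) * y i
   - ((i == j)%:R * (qq K chi i i)^-1 * l i) *: (rho (K i) - rho (- L i))
  = - (chi i (L j))^-1 *: ((x j * y i - chi i (L j) *: (y i * x j)
        - ((j == i)%:R * l j) *: (1 - rho (K j + L j))) * rho (- L j)).
Proof.
have cnz := chi_nz (chars i) (L j).
rewrite -(mulrA (x j)) (ryc hs) -scalerAr (chiN (chars i)) mulrA.
rewrite (mulrA (x j)) !mulrBl -!scalerAl mulrBl mul1r -(rhoD hs) addrK.
rewrite !scalerBr !scalerA mulNr mulVf //.
rewrite scaleN1r opprK.
case: eqVneq => [<-|ne]; last first.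
  rewrite ?mul0r ?mulr0 ?scale0r ?subrr ?subr0. by rewrite scaleNr addrC.
rewrite /qq -Lrel !mul1r !mulNr !scaleNr.
congr (_ - _); first by rewrite addrC.
by rewrite opprK addrC.
Qed.

End Mixed.


Section FSerre.
Variables (k : fieldType) (G : zmodType) (B : algType k) (n : nat).
Variables (chi : 'I_n -> G -> k) (x y : 'I_n -> B) (rho : G -> B).
Variables (L : 'I_n -> G).
Hypothesis hs : smash_rep chi x y rho.
Hypothesis chars : forall i, is_character (chi i).
Variables i j : 'I_n.

Let W m := iter m (adc (rho (L i)) (rho (- L i)) (x i)) (x j).
Let th m := (chi i (L i))^-1 ^+ m * (chi j (L i))^-1.
Let H m := rho (- (L i *+ m + L j)).
Let Fi := x i * rho (- L i).
Let Fj := x j * rho (- L j).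
Let gam m := chi i (- (L i *+ m + L j)).

Lemma W_hom m : rho (L i) * W m * rho (- L i) = th m *: W m.
Proof.
case: (hs) => _ [_ [hx _]].
apply: adc_hom; first exact: rhoVl hs _.
- exact: hx.
- exact: hx.
Qed.

Lemma th_nz m : th m != 0.
Proof. by rewrite /th mulf_neq0 ?expf_neq0 ?invr_neq0 ?(chi_nz (chars _)). Qed.

Lemma W_rec m : W m.+1 * H m.+1 = th m *: (Fi * (W m * H m) - gam m *: ((W m * H m) * Fi)).
Proof.
have eH : H m.+1 = H m * rho (- L i).
  by rewrite /H -(rhoD hs); congr rho; rewrite mulrS -addrA opprD; exact: addrC.
have h1 : rho (- L i) * W m = (th m)^-1 *: (W m * rho (- L i)).
  symmetry; rewrite -[W m * _]mul1r -(rhoVl hs (L i)) -!mulrA (mulrA (rho (L i))) W_hom.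
  by rewrite -scalerAr scalerA mulVf ?th_nz // scale1r.
have e1 : Fi * (W m * H m) = (th m)^-1 *: (x i * W m * H m.+1).
  rewrite /Fi -mulrA (mulrA _ (W m)) h1 -scalerAl -scalerAr -!mulrA; congr (_ *: (_ * _)).
  by rewrite eH (rhoC hs).
have e2 : (W m * H m) * Fi = (gam m)^-1 *: (W m * x i * H m.+1).
  rewrite eH /Fi mulrA -(mulrA (W m)) /H (rxc hs) -scalerAr -scalerAl -!mulrA.
  done.
have gnz : gam m != 0 by rewrite /gam (chi_nz (chars _)).
rewrite e1 e2 scalerA mulfV // scale1r scalerBr scalerA mulfV ?th_nz // scale1r.
rewrite /= /adc W_hom mulrBl -scalerAl -!mulrA.
by rewrite -scalerAl -(mulrA (W m)).
Qed.

Lemma W_exp m : W m * H m = (\prod_(t < m) th t) *: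
   \sum_(0 <= s < m.+1) Cf gam m s *: (Fi ^+ (m - s) * Fj * Fi ^+ s).
Proof.
have := @expand _ _ Fi (fun m => W m * H m) th gam W_rec m.
by rewrite /= /H mulr0n add0r.
Qed.

Lemma W_iff m : W m = 0 <->
   \sum_(0 <= s < m.+1) Cf gam m s *: (Fi ^+ (m - s) * Fj * Fi ^+ s) = 0.
Proof.
have pnz : \prod_(t < m) th t != 0 by apply/prodf_neq0 => t _; exact: th_nz.
split=> h.
  have := W_exp m; rewrite h mul0r => /(congr1 (fun v => (\prod_(t < m) th t)^-1 *: v)).
  by rewrite scaler0 scalerA mulVf // scale1r => <-.
rewrite -[W m]mulr1 -(rhoV hs (- (L i *+ m + L j))) opprK mulrA.
by rewrite -/(H m) W_exp h scaler0 mul0r.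
Qed.
End FSerre.


Lemma Cf_ext (k : fieldType) (g1 g2 : nat -> k) m s :
  (forall t, g1 t = g2 t) -> Cf g1 m s = Cf g2 m s.
Proof.
move=> h; rewrite /Cf; apply: (congr1 (fun p : {poly k} => p`_s)).
by apply: eq_bigr => t _; rewrite h.
Qed.

Lemma coef_closed (k : fieldType) (Q b : k) N s : Q != 0 ->
  Cf (fun t => Q ^+ (2 * t) * b) N.+1 s = (- (b * Q ^+ N)) ^+ s * gbinom Q N.+1 s.
Proof.
move=> Q0; apply: (mulfI (expf_neq0 s Q0)); rewrite Cf_closed //.
rewrite -mulNr exprMn -exprM mulnS exprD [(N * s)%N]mulnC; ring.
Qed.

Theorem lemma3p13 (k : closedFieldType) (G : zmodType) (n : nat)
    (L K : 'I_n -> G) (chi : 'I_n -> G -> k) (A : 'M[int]_n) (l : 'I_n -> k)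
    (d : 'I_n -> nat) (qJ : 'I_n -> k) :
  [pchar k] =i pred0 ->
  reduced_datum L K chi A ->
  (forall i, l i != 0) ->
  (forall i, d i \in [:: 1; 2; 3]%N) ->
  (forall i j, dynkin_conn A i j -> qJ i = qJ j) ->
  (forall i, qq K chi i i = qJ i ^+ (2 * d i)) ->
  (forall i j, dynkin_conn A i j -> (d i)%:Z * A i j = (d j)%:Z * A j i) ->
  forall (B : algType k) (x y : 'I_n -> B) (rho : G -> B),
  smash_rep chi x y rho ->
  let E := y in
  let F := fun i => x i * rho (- L i) in
  (orig_rels L K chi A l x y rho <-> new_rels L K chi A l d qJ E F rho) /\
  (forall g i, rho g * E i * rho (- g) = chi i g *: E i) /\
  (forall g i, rho g * F i * rho (- g) = (chi i g)^-1 *: F i) /\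
  (forall (C : pzRingType) (Delta : B -> C) (t : B -> B -> C),
     (forall a b, Delta (a * b) = Delta a * Delta b) ->
     (forall a b c e, t a b * t c e = t (a * c) (b * e)) ->
     (forall i, Delta (x i) = t (rho (L i)) (x i) + t (x i) 1) ->
     (forall i, Delta (y i) = t (rho (K i)) (y i) + t (y i) 1) ->
     (forall g, Delta (rho g) = t (rho g) (rho g)) ->
     forall i, Delta (E i) = t (rho (K i)) (E i) + t (E i) 1 /\
               Delta (F i) = t 1 (F i) + t (F i) (rho (- L i))).
Proof.
move=> char0 [n0 [[Adiag [Aoff [Asym _]]] [chars [Kprod [Lrel [KL chiK1]]]]]].
move=> l0 dIn qJconn qii dsym B x y rho hs E F.
have [rho0 [rhoD' [hx hy]]] := hs.
split; last split; last split.
- have Q0 : forall i, qJ i ^+ d i != 0.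
    move=> i; have := chi_nz (chars i) (K i).
    rewrite -[chi i (K i)]/(qq K chi i i) qii mulnC exprM.
    by apply: contra => /eqP ->; rewrite expr0n.
  have qiiQ : forall i, chi i (K i) = (qJ i ^+ d i) ^+ 2.
    by move=> i; rewrite -[chi i (K i)]/(qq K chi i i) qii mulnC exprM.
  have Nex : forall i j, i != j -> exists2 N : nat, A i j = - (N%:Z) & `|1 - A i j|%N = N.+1.
    move=> i j ne; exists `|A i j|%N; first by rewrite lez0_abs ?opprK // Aoff.
    have e : 1 - A i j = (`|A i j|%N.+1)%:Z.
      by rewrite -addn1 PoszD lez0_abs ?Aoff // addrC.
    by rewrite e absz_nat.
  have key : forall i j N, A i j = - (N%:Z) ->
      qq K chi i i ^+ N * (qq K chi i j * qq K chi j i) = 1.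
    move=> i j N hA; have := Kprod i j; rewrite hA -exprnN /qq [chi j (K i) * _]mulrC => ->.
    by rewrite mulrC mulVf // expf_neq0 // (chi_nz (chars i)).
  have ppv : forall i j N, i != j -> A i j = - (N%:Z) ->
      pp K chi A d qJ i j = qq K chi i j * (qJ i ^+ d i) ^+ N.
    move=> i j N ne hA; rewrite /pp; case: ifP => conn.
      by rewrite hA mulrN opprK -PoszM -exprM.
    have A0 : A i j = 0.
      by apply/eqP; apply: contraFT conn => h; apply: connect1.
    by move: hA; rewrite A0 => /eqP; rewrite eq_sym oppr_eq0 => /eqP [->]; rewrite expr0 mulr1.
  have Eq1 : forall i j, i != j ->
     (iter `|1 - A i j|%N (adc (rho (K i)) (rho (- K i)) (y i)) (y j) = 0 <->
      \sum_(s < `|1 - A i j|%N.+1)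
        ((- pp K chi A d qJ i j) ^+ s * gbinom (qJ i ^+ d i) `|1 - A i j|%N s)
          *: (E i ^+ (`|1 - A i j|%N - s) * E j * E i ^+ s) = 0).
    move=> i j ne; have [N hA hM] := Nex i j ne.
    rewrite hM (iter_expand (rhoVl hs _) (hy _ _) (hy _ _)) big_mkord.
    match goal with |- (?S1 = 0) <-> (?S2 = 0) => have -> : S1 = S2; last by [] end.
    apply: eq_bigr => s _; congr (_ *: _).
    rewrite (ppv i j N ne hA) -(coef_closed _ _ _ (Q0 i)); apply: Cf_ext => t.
    by rewrite qiiQ -(exprM (qJ i ^+ d i)).
  have Eq2 : forall i j, i != j ->
     (iter `|1 - A i j|%N (adc (rho (L i)) (rho (- L i)) (x i)) (x j) = 0 <->
      \sum_(s < `|1 - A i j|%N.+1)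
        ((- (pp K chi A d qJ i j)^-1) ^+ s * gbinom (qJ i ^+ d i) `|1 - A i j|%N s)
          *: (F i ^+ (`|1 - A i j|%N - s) * F j * F i ^+ s) = 0).
    move=> i j ne; have [N hA hM] := Nex i j ne.
    have hk := key i j N hA; rewrite /qq qiiQ in hk.
    have qij0 : qq K chi i j != 0 by apply: (chi_nz (chars j)).
    have ppi : (pp K chi A d qJ i j)^-1 = qq K chi j i * (qJ i ^+ d i) ^+ N.
      rewrite (ppv i j N ne hA) -[LHS]mulr1 -hk -(exprM (qJ i ^+ d i)) mulnC exprM /qq.
      by field; rewrite expf_neq0 ?Q0 // (chi_nz (chars j)).
    rewrite hM (W_iff L hs chars i j) big_mkord.
    match goal with |- (?S1 = 0) <-> (?S2 = 0) => have -> : S1 = S2; last by [] end.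
    apply: eq_bigr => s _; congr (_ *: _).
    rewrite ppi -(coef_closed _ _ _ (Q0 i)); symmetry; apply: Cf_rev => t ht.
    have le : (t <= N)%N by [].
    rewrite (chiN (chars i)) (chiD (chars i)) (chiMn (chars i)) !Lrel qiiQ.
    set a := _ * _; have a0 : a != 0.
      by rewrite /a mulf_neq0 // expf_neq0 // expf_neq0 // Q0.
    apply: (mulfI a0); rewrite mulfV //.
    have eN : (qJ i ^+ d i ^+ 2) ^+ N = (qJ i ^+ d i ^+ 2) ^+ t * (qJ i ^+ d i ^+ 2) ^+ (N - t).
      by rewrite -exprD subnKC.
    rewrite subSS (exprM (qJ i ^+ d i)) -hk eN /a /qq; ring.
  have Eq3 : forall i j,
     (x j * y i - chi i (L j) *: (y i * x j) - ((j == i)%:R * l j) *: (1 - rho (K j + L j)) = 0) <->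
     (E i * F j - F j * E i = ((i == j)%:R * (qq K chi i i)^-1 * l i) *: (rho (K i) - rho (- L i))).
    move=> i j; have e := mixed_eq l hs chars Lrel i j.
    have c0 : - (chi i (L j))^-1 != 0 by rewrite oppr_eq0 invr_eq0 (chi_nz (chars i)).
    split => h.
      by apply/eqP; rewrite -subr_eq0; apply/eqP; rewrite /E /F /= e h mul0r scaler0.
    move/eqP: h; rewrite -subr_eq0 /E /F /= e scaler_eq0 (negPf c0) /= => /eqP h.
    have hinv : forall v : B, v * rho (- L j) = 0 -> v = 0.
      by move=> v hv; rewrite -[v]mulr1 -(rhoV hs (- L j)) mulrA hv mul0r.
    exact: hinv.
  rewrite /orig_rels /new_rels; split.
    move=> [h1 [h2 h3]]; split; last split.
    + by move=> i j ne; apply/Eq1 => //; apply: h2.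
    + by move=> i j ne; apply/Eq2 => //; apply: h1.
    + by move=> i j; apply/Eq3; apply: h3.
  move=> [h1 [h2 h3]]; split; last split.
  + by move=> i j ne; apply/Eq2 => //; apply: h2.
  + by move=> i j ne; apply/Eq1 => //; apply: h1.
  + by move=> i j; apply/(Eq3 j i); apply: h3.
- exact: hy.
- move=> g i; rewrite /F mulrA -mulrA (rhoC hs (- L i)) mulrA hx -scalerAl //.
- move=> C Delta t DM tM Dx Dy Drho i; split; first exact: Dy.
  by rewrite /F DM Dx Drho mulrDl !tM (rhoV hs) mul1r.
Qed.
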